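(* Let $m\ge d\ge1$, $\lambda=d/m$, and let $p$ be a monic polynomial of degree $d$ with nonnegative roots. Then \[ y^{m-d}p(xy)=e^{-\widehat{\mathcal R}(\partial_x\partial_y)}\{y^mx^d\},\qquad\text{where }\ \widehat{\mathcal R}(s):=d\int_0^s\frac{\mathcal R^{d,\lambda}_{\mathbb{S}p}\big(\frac{u}{md}\big)}{u}\,du . \] In particular $p$ is uniquely determined by $\mathcal R^{d,\lambda}_{\mathbb{S}p}$.
   Context: Write $p=\sum_{i=0}^d(-1)^ip_ix^{d-i}$ and $E_p(s)=\sum_{i=0}^d(-1)^i(md)^i\frac{(m-i)!(d-i)!}{m!d!}p_is^i$; $\mathcal R^{d,\lambda}_{\mathbb{S}p}(s)$ is the polynomial of degree $\le d$ (with zero constant term) agreeing with $-\frac sd\frac d{ds}\log E_p(s)$ mod $s^{d+1}$. The exponential of a differential operator is defined by its power series; only finitely many terms act nontrivially on $y^mx^d$. *)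

(* Defs.v *)
From HB Require Import structures.
From mathcomp Require Import all_boot all_order all_algebra.
Set Implicit Arguments. Unset Strict Implicit. Unset Printing Implicit Defensive.
Import Order.TTheory GRing.Theory Num.Theory.
Local Open Scope ring_scope.

Section Defs.
Variable R : fieldType.

(* p = \sum_i (-1)^i p_i x^(d-i), so p_i = (-1)^i * (coefficient of x^(d-i)). *)
Definition pcoef (d : nat) (p : {poly R}) (i : nat) : R :=
  (-1) ^+ i * p`_(d - i).

Definition Ep (m d : nat) (p : {poly R}) : {poly R} :=
  \poly_(i < d.+1)
    ((-1) ^+ i * ((m * d)%:R) ^+ i * ((m - i)`! * (d - i)`!)%:R
       / ((m`! * d`!)%:R) * pcoef d p i).

(* Truncated geometric series: if E`_0 = 1 then
   invTrunc n E * E = 1 mod s^(n+1), i.e. it is 1/E modulo s^(n+1). *)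
Definition invTrunc (n : nat) (E : {poly R}) : {poly R} :=
  \sum_(k < n.+1) (1 - E) ^+ k.

(* R^{d,lambda}_{Sp}(s): the polynomial of degree <= d (zero constant term)
   agreeing with -(s/d) (d/ds) log E_p(s) = -(s/d) E_p'(s)/E_p(s)
   modulo s^(d+1); computed as the truncation to degree <= d of
   -(1/d) s E_p'(s) (1/E_p mod s^(d+1)). *)
Definition RSp (m d : nat) (p : {poly R}) : {poly R} :=
  take_poly d.+1
    (- (d%:R)^-1 *: ('X * (Ep m d p)^`() * invTrunc d (Ep m d p))).

Definition polyint (q : {poly R}) : {poly R} :=
  \poly_(k < (size q).+1) (if k is k'.+1 then q`_k' / (k'.+1)%:R else 0).

(* Rhat(s) = d \int_0^s R(u/(md)) / u du; since R has zero constant term,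
   R(u/(md))/u is the polynomial (R \Po (u/(md))) %/ u. *)
Definition Rhat (m d : nat) (Rp : {poly R}) : {poly R} :=
  d%:R *: polyint ((Rp \Po (((m * d)%:R)^-1 *: 'X)) %/ 'X).

(* Bivariate polynomials: {poly {poly R}}, outer variable x, inner variable y. *)
Definition Dxy (f : {poly {poly R}}) : {poly {poly R}} :=
  map_poly (@deriv R) (deriv f).

Definition applyOp (Q : {poly R}) (f : {poly {poly R}}) : {poly {poly R}} :=
  \sum_(i < size Q) (Q`_i)%:P%:P * iter i Dxy f.

Definition expOp (Q : {poly R}) (N : nat) (f : {poly {poly R}}) : {poly {poly R}} :=
  \sum_(n < N) ((n`!)%:R^-1)%:P%:P * iter n (applyOp Q) f.

Definition monoYX (m d : nat) : {poly {poly R}} := ('X^m)%:P * 'X^d.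

Definition subst_xy (p : {poly R}) : {poly {poly R}} :=
  \poly_(j < size p) ((p`_j)%:P * 'X^j).

End Defs.

Definition nonneg_rooted (R : realFieldType) (p : {poly R}) : Prop :=
  exists rs : seq R, p = \prod_(r <- rs) ('X - r%:P) /\ all (fun r => 0 <= r) rs.

(* Main.v *)
Require Import Defs.
From HB Require Import structures.
From mathcomp Require Import all_boot all_order all_algebra.
From mathcomp Require Import zify ring.
Set Implicit Arguments. Unset Strict Implicit. Unset Printing Implicit Defensive.
Import Order.TTheory GRing.Theory Num.Theory.
Local Open Scope ring_scope.
Section Op.
Variable R : realFieldType.
Implicit Types (P Q : {poly R}) (f g : {poly {poly R}}).

Lemma DxyD f g : Dxy (f + g) = Dxy f + Dxy g.
Proof. by rewrite /Dxy derivD raddfD. Qed.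

Lemma DxyC (c : R) f : Dxy (c%:P%:P * f) = c%:P%:P * Dxy f.
Proof.
rewrite /Dxy !mul_polyC derivZ; apply/polyP => i.
rewrite coef_map_id0 ?raddf0 // !coefZ coef_map_id0 ?raddf0 //.
by rewrite !mul_polyC derivZ.
Qed.

Lemma Dxy0 : Dxy (0 : {poly {poly R}}) = 0.
Proof. by rewrite /Dxy raddf0 raddf0. Qed.

Lemma iterD_D n f g : iter n (@Dxy R) (f + g) = iter n (@Dxy R) f + iter n (@Dxy R) g.
Proof. by elim: n => //= n ->; rewrite DxyD. Qed.

Lemma iterD_C n (c : R) f : iter n (@Dxy R) (c%:P%:P * f) = c%:P%:P * iter n (@Dxy R) f.
Proof. by elim: n => //= n ->; rewrite DxyC. Qed.

Lemma iterD_0 n : iter n (@Dxy R) (0 : {poly {poly R}}) = 0.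
Proof. by elim: n => //= n ->; rewrite Dxy0. Qed.

Lemma iterD_sum n (I : finType) (F : I -> {poly {poly R}}) :
  iter n (@Dxy R) (\sum_i F i) = \sum_i iter n (@Dxy R) (F i).
Proof.
elim/big_rec2: _ => [|i y1 y2 _ <-]; first exact: iterD_0.
by rewrite iterD_D.
Qed.

Lemma applyOp_widen Q f n : (size Q <= n)%N ->
  applyOp Q f = \sum_(i < n) (Q`_i)%:P%:P * iter i (@Dxy R) f.
Proof.
move=> hn; rewrite /applyOp (big_ord_widen _ (fun i => (Q`_i)%:P%:P * iter i (@Dxy R) f) hn) big_mkcond /=.
apply: eq_bigr => i _; case: ifP => // /negbT; rewrite -leqNgt => h.
by rewrite nth_default // mul0r.
Qed.

Lemma applyOpD P Q f : applyOp (P + Q) f = applyOp P f + applyOp Q f.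
Proof.
set n := maxn (size P) (size Q).
rewrite (@applyOp_widen (P + Q) f n); last by rewrite (leq_trans (size_polyD _ _)).
rewrite (@applyOp_widen P f n) ?leq_maxl // (@applyOp_widen Q f n) ?leq_maxr //.
by rewrite -big_split; apply: eq_bigr => i _; rewrite coefD !polyCD mulrDl.
Qed.

Lemma applyOpZ (c : R) P f : applyOp (c *: P) f = c%:P%:P * applyOp P f.
Proof.
rewrite (@applyOp_widen (c *: P) f (size P)); last exact: size_scale_leq. rewrite /applyOp.
rewrite big_distrr; apply: eq_bigr => i _.
by rewrite coefZ !polyCM -mulrA.
Qed.

Lemma applyOp0 f : applyOp 0 f = 0.
Proof. by rewrite /applyOp size_poly0 big_ord0. Qed.

Lemma applyOpC (c : R) f : applyOp c%:P f = c%:P%:P * f.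
Proof.
rewrite (@applyOp_widen c%:P f 1) ?size_polyC_leq1 //.
by rewrite big_ord1 coefC.
Qed.

Lemma applyOp_sumf Q f g : applyOp Q (f + g) = applyOp Q f + applyOp Q g.
Proof.
by rewrite /applyOp -big_split; apply: eq_bigr => i _; rewrite iterD_D mulrDr.
Qed.

Lemma applyOp_Cf Q (c : R) f : applyOp Q (c%:P%:P * f) = c%:P%:P * applyOp Q f.
Proof.
rewrite /applyOp big_distrr; apply: eq_bigr => i _.
by rewrite iterD_C /= !mulrA [_%:P%:P * c%:P%:P]mulrC.
Qed.

Lemma applyOp_D Q f : applyOp Q (Dxy f) = Dxy (applyOp Q f).
Proof.
rewrite /applyOp.
elim/big_rec2: _ => [|i y1 y2 _ ->]; first by rewrite Dxy0.
by rewrite DxyD DxyC -iterSr.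
Qed.

Lemma applyOpMX P f : applyOp (P * 'X) f = applyOp P (Dxy f).
Proof.
have [->|P0] := eqVneq P 0; first by rewrite mul0r !applyOp0.
rewrite /applyOp size_mulX // big_ord_recl coefMX /= mul0r add0r.
by apply: eq_bigr => i _; rewrite coefMX /= add0n -iterS iterSr.
Qed.

Lemma applyOpM P Q f : applyOp (P * Q) f = applyOp P (applyOp Q f).
Proof.
elim/poly_ind: P f => [|P c IH] f; first by rewrite mul0r !applyOp0.
by rewrite mulrDl mulrAC applyOpD applyOpMX IH mul_polyC applyOpZ applyOpD
  applyOpMX applyOpC applyOp_D.
Qed.

Lemma applyOp1 f : applyOp 1 f = f.
Proof. by rewrite -polyC1 applyOpC mul1r. Qed.

Lemma iter_applyOp Q n f : iter n (applyOp Q) f = applyOp (Q ^+ n) f.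
Proof.
elim: n => [|n IH]; first by rewrite expr0 applyOp1.
by rewrite iterS IH exprS applyOpM.
Qed.

Lemma applyOp_sum N (F : nat -> {poly R}) f :
  applyOp (\sum_(n < N) F n) f = \sum_(n < N) applyOp (F n) f.
Proof.
elim/big_rec2: _ => [|i y1 y2 _ <-]; first exact: applyOp0.
by rewrite applyOpD.
Qed.

Lemma expOpE Q N f :
  expOp Q N f = applyOp (\sum_(n < N) ((n`!)%:R^-1) *: Q ^+ n) f.
Proof.
rewrite (applyOp_sum N (fun n => ((n`!)%:R^-1) *: Q ^+ n)) /expOp; apply: eq_bigr => n _.
by rewrite applyOpZ iter_applyOp.
Qed.

Lemma applyOpMXn P n f : applyOp (P * 'X^n) f = applyOp P (iter n (@Dxy R) f).
Proof.
elim: n f => [|n IH] f; first by rewrite expr0 mulr1.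
by rewrite exprSr mulrA applyOpMX IH -iterSr.
Qed.

Lemma applyOp_f0 Q : applyOp Q 0 = 0.
Proof. by rewrite -(mul0r 0) -polyC0 -polyC0 applyOp_Cf !mul0r. Qed.

Definition term (c : R) (a b : nat) : {poly {poly R}} := (c *: 'X^a) *: 'X^b.

Lemma Dxy_term c a b : Dxy (term c a b) = term (c *+ (a * b)) a.-1 b.-1.
Proof.
apply/polyP => k; rewrite /Dxy /term coef_map_id0 ?raddf0 // coef_deriv.
rewrite !coefZ !coefXn.
case: b => [|b] /=; first by rewrite mulr0 mul0rn raddf0 muln0 mulr0n scale0r mul0r.
rewrite eqSS; case: eqP => [->|_]; last by rewrite !mulr0 mul0rn raddf0.
rewrite !mulr1 derivMn derivZ derivXn.
by rewrite scalerMnl -scalerMnr scalerMnl -mulrnA [(b.+1 * a)%N]mulnC.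
Qed.

Lemma iterD_term i c a b :
  iter i (@Dxy R) (term c a b) = term (c *+ (a ^_ i * b ^_ i)) (a - i) (b - i).
Proof.
elim: i => [|i IH]; first by rewrite /= !subn0 mulr1n.
rewrite iterS IH Dxy_term -!subnS -mulrnA !ffactnSr.
by rewrite [(a ^_ i * (a - i) * _)%N]mulnACA.
Qed.

Lemma Cterm c' c a b : c'%:P%:P * term c a b = term (c' * c) a b.
Proof. by rewrite /term !mul_polyC scalerA mul_polyC scalerA. Qed.

Lemma monoE m d : monoYX R m d = term 1 m d.
Proof. by rewrite /monoYX /term mul_polyC scale1r. Qed.

Lemma applyOp_mono F m d : applyOp F (monoYX R m d)
  = \sum_(i < d.+1) term (F`_i *+ (m ^_ i * d ^_ i)) (m - i) (d - i).
Proof.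
rewrite -{1}(poly_take_drop d.+1 F) applyOpD applyOpMXn monoE iterD_term.
rewrite [d ^_ d.+1]ffact_small // muln0 mulr0n /term scale0r scale0r applyOp_f0 addr0.
rewrite (@applyOp_widen _ _ d.+1) ?size_take_poly //.
apply: eq_bigr => i _; rewrite coef_take_poly ltn_ord iterD_term Cterm.
by rewrite mulr_natr.
Qed.
End Op.
Section Ser.
Variable R : realFieldType.
Implicit Types (P Q A Z : {poly R}).

Definition lowz n P := forall k, (k < n)%N -> P`_k = 0.

Lemma lowzM a b P Q : lowz a P -> lowz b Q -> lowz (a + b) (P * Q).
Proof.
move=> hP hQ k hk; rewrite coefM big1 // => [[j /=]]; rewrite ltnS => hj _.
case: (ltnP j a) => ha; first by rewrite hP ?mul0r.
by rewrite hQ ?mulr0 //; lia.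
Qed.

Lemma lowzMl a P Q : lowz a P -> lowz a (P * Q).
Proof. by move=> h; rewrite -(addn0 a); apply: lowzM. Qed.

Lemma lowzMr a P Q : lowz a Q -> lowz a (P * Q).
Proof. by move=> h; rewrite mulrC; apply: lowzMl. Qed.

Lemma lowzD n P Q : lowz n P -> lowz n Q -> lowz n (P + Q).
Proof. by move=> hP hQ k hk; rewrite coefD hP ?hQ ?addr0. Qed.

Lemma lowzN n P : lowz n P -> lowz n (- P).
Proof. by move=> hP k hk; rewrite coefN hP ?oppr0. Qed.

Lemma lowzB n P Q : lowz n P -> lowz n Q -> lowz n (P - Q).
Proof. by move=> hP hQ; apply: lowzD => //; apply: lowzN. Qed.

Lemma lowzZ n (c : R) P : lowz n P -> lowz n (c *: P).
Proof. by move=> hP k hk; rewrite coefZ hP ?mulr0. Qed.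

Lemma lowz_le n n' P : (n <= n')%N -> lowz n' P -> lowz n P.
Proof. by move=> hn hP k hk; rewrite hP // (leq_trans hk). Qed.

Lemma lowzX n P : lowz 1 P -> lowz n (P ^+ n).
Proof.
move=> h; elim: n => [|n IH]; first by move=> k.
by rewrite exprS -add1n; apply: lowzM.
Qed.

Lemma lowzXM n P : lowz n.+1 ('X * P) -> lowz n P.
Proof. by move=> h k hk; have := h k.+1 hk; rewrite coefXM. Qed.

Lemma ode_uniq d A Z : Z`_0 = 0 -> lowz d (Z^`() - A * Z) -> lowz d.+1 Z.
Proof.
move=> Z0 hZ.
suff H : forall k, (k <= d)%N -> forall j, (j <= k)%N -> Z`_j = 0.
  by move=> k hk; apply: (H d) => //; rewrite -ltnS.
elim=> [|k IH] hk j hj.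
  by move: hj; rewrite leqn0 => /eqP ->.
move: hj; rewrite leq_eqVlt => /orP [/eqP ->|]; last first.
  by rewrite ltnS; apply: IH; rewrite ltnW.
have hk' : (k < d)%N by [].
have := hZ k hk'; rewrite coefB coef_deriv.
have -> : (A * Z)`_k = 0.
  have hl : lowz k.+1 Z by move=> j0 hj0; apply: (IH (ltnW hk')); rewrite -ltnS.
  by rewrite (@lowzMr k.+1 A Z hl).
by rewrite subr0 => /eqP; rewrite mulrn_eq0 /= => /eqP.
Qed.

Lemma ode_split A G H n : lowz n (G^`() - A * G) -> lowz n (H^`() - A * H) ->
  lowz n ((G - H)^`() - A * (G - H)).
Proof.
move=> h1 h2.
have -> : (G - H)^`() - A * (G - H) = (G^`() - A * G) - (H^`() - A * H).
  by rewrite derivB; ring.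
exact: lowzB.
Qed.

Definition expser N (L : {poly R}) : {poly R} := \sum_(n < N) ((n`!)%:R^-1) *: L ^+ n.

Lemma expser_deriv N L :
  lowz 1 L -> lowz N ((expser N.+1 L)^`() - L^`() * expser N.+1 L).
Proof.
move=> hL.
have -> : (expser N.+1 L)^`() = \sum_(i < N) ((i`!)%:R^-1) *: (L^`() * L ^+ i).
  rewrite /expser raddf_sum big_ord_recl /= derivZ deriv_exp mulr0n scaler0 add0r.
  apply: eq_bigr => i _; rewrite derivZ deriv_exp /= -scaler_nat scalerA.
  congr (_ *: _); rewrite factS natrM invfM /bump /= add1n mulrAC mulVf ?mul1r //.
  by rewrite pnatr_eq0.
rewrite /expser big_ord_recr /= mulrDr mulr_sumr opprD addrA.
rewrite (_ : \sum_(i < N) _ - _ = 0); last first.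
  apply/eqP; rewrite subr_eq0; apply/eqP; apply: eq_bigr => i _; by rewrite scalerAr.
rewrite add0r; apply: lowzN; apply: lowzMr; apply: lowzZ; exact: lowzX.
Qed.

Lemma expser0 N L : lowz 1 L -> (expser N.+1 L)`_0 = 1.
Proof.
move=> hL; rewrite /expser big_ord_recl /= expr0 coefD coefZ coef1 /= invr1 mulr1.
rewrite coef_sum big1 ?addr0 // => i _; rewrite coefZ lowzX ?mulr0 //.
Qed.

Lemma coef_compZX (c : R) P k : (P \Po (c *: 'X))`_k = c ^+ k * P`_k.
Proof.
rewrite comp_polyE coef_sum.
have [hk|hk] := ltnP k (size P).
  rewrite (bigD1 (Ordinal hk)) //= big1 => [|i ne].
    by rewrite addr0 exprZn !coefZ coefXn eqxx mulr1 mulrC.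
  rewrite exprZn !coefZ coefXn; case: eqP => [hi|]; last by rewrite !mulr0.
  by move: ne; rewrite -val_eqE /= hi eqxx.
rewrite nth_default // mulr0 big1 // => i _.
rewrite exprZn !coefZ coefXn; case: eqP => [hi|]; last by rewrite !mulr0.
by move: (ltn_ord i); rewrite -hi ltnNge hk.
Qed.

Lemma lowz_comp n (c : R) P : lowz n P -> lowz n (P \Po (c *: 'X)).
Proof. by move=> h k hk; rewrite coef_compZX h ?mulr0. Qed.

Lemma deriv_polyint (q : {poly R}) : (polyint q)^`() = q.
Proof.
apply/polyP => i; rewrite coef_deriv /polyint coef_poly ltnS.
case: ltnP => hi; last by rewrite mul0rn nth_default.
have h : (1 + i%:R : R) != 0 by rewrite addrC natr1 pnatr_eq0.
by field.
Qed.

Lemma polyint0 (q : {poly R}) : (polyint q)`_0 = 0.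
Proof. rewrite /polyint coef_poly. by case: (0 < _)%N. Qed.

End Ser.

Section Main.
Variables (R : realFieldType) (m d : nat) (p : {poly R}).
Hypotheses (hd : (1 <= d)%N) (hdm : (d <= m)%N) (hsz : size p = d.+1)
  (hmon : p \is monic).

Local Notation E := (Ep m d p).
Local Notation c := (((m * d)%:R)^-1 : R).
Local Notation sig P := (P \Po (c *: 'X)).

Lemma hdR : (d%:R : R) != 0.
Proof. by rewrite pnatr_eq0 -lt0n. Qed.

Lemma E0 : E`_0 = 1.
Proof.
have hp : p`_d = 1 by move/monicP: hmon; rewrite /lead_coef hsz.
rewrite /Ep coef_poly /= /pcoef !subn0 !expr0 !mul1r hp mulr1 divff //.
by rewrite pnatr_eq0 -lt0n muln_gt0 !fact_gt0.
Qed.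

Lemma geom_trunc (u : {poly R}) n :
  (\sum_(k < n) u ^+ k) * (1 - u) - 1 = - u ^+ n.
Proof.
have h := subrX1 u n.
rewrite (_ : (\sum_(k < n) u ^+ k) * (1 - u) = - ((u - 1) * \sum_(k < n) u ^+ k)); last by ring.
by rewrite -h; ring.
Qed.

Lemma T_E : lowz d.+1 (invTrunc d E * E - 1).
Proof.
have -> : invTrunc d E * E - 1 = - (1 - E) ^+ d.+1.
  by rewrite -geom_trunc /invTrunc subKr.
apply: lowzN; apply: lowzX => k; rewrite ltnS leqn0 => /eqP ->.
by rewrite coefB coef1 E0 subrr.
Qed.

Lemma claimA : lowz d.+1 (RSp m d p * E + d%:R^-1 *: ('X * E^`())).
Proof.
set W := - (d%:R^-1) *: ('X * E^`() * invTrunc d E).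
have hRW : lowz d.+1 (RSp m d p - W).
  by move=> k hk; rewrite coefB /RSp coef_take_poly hk subrr.
have -> : RSp m d p * E + d%:R^-1 *: ('X * E^`()) =
   (RSp m d p - W) * E - d%:R^-1 *: ('X * E^`() * (invTrunc d E * E - 1)).
  by rewrite /W -!mul_polyC; ring.
apply: lowzB; first exact: lowzMl.
by apply: lowzZ; apply: lowzMr; exact: T_E.
Qed.

Lemma H_deriv : (sig E)^`() = c *: sig (E^`()).
Proof. by rewrite deriv_comp derivZ derivX -scalerAr mulr1. Qed.

Lemma claimB : lowz d.+1 (sig (RSp m d p) * sig E + d%:R^-1 *: ('X * (sig E)^`())).
Proof.
have -> : d%:R^-1 *: ('X * (sig E)^`()) = sig (d%:R^-1 *: ('X * E^`())).
  by rewrite comp_polyZ comp_polyM comp_polyX H_deriv -!mul_polyC; ring.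
by rewrite -comp_polyM -comp_polyD; apply: lowz_comp; exact: claimA.
Qed.

Lemma S0 : (sig (RSp m d p))`_0 = 0.
Proof.
rewrite coef_compZX /RSp coef_take_poly /= coefZ -!mulrA coefXM /=.
by rewrite !mulr0.
Qed.

Lemma XV : 'X * (sig (RSp m d p) %/ 'X) = sig (RSp m d p).
Proof.
rewrite -(expr1 'X) -Pdiv.IdomainMonic.drop_poly_divp expr1.
apply/polyP => k; rewrite coefXM; case: k => [|k] /=; first by rewrite S0.
by rewrite coef_drop_poly addn1.
Qed.

Local Notation L := (- Rhat m d (RSp m d p)).

Lemma L_deriv : L^`() = - (d%:R *: (sig (RSp m d p) %/ 'X)).
Proof. by rewrite derivN /Rhat derivZ deriv_polyint. Qed.

Lemma L_low : lowz 1 L.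
Proof.
move=> k; rewrite ltnS leqn0 => /eqP ->.
by rewrite coefN /Rhat coefZ polyint0 mulr0 oppr0.
Qed.

Lemma claimC : lowz d ((sig E)^`() - L^`() * sig E).
Proof.
apply: lowzXM.
have -> : 'X * ((sig E)^`() - L^`() * sig E) =
   d%:R *: (sig (RSp m d p) * sig E + d%:R^-1 *: ('X * (sig E)^`())).
  rewrite scalerDr scalerA mulfV ?hdR // scale1r L_deriv -{2}XV.
  by rewrite -!mul_polyC; ring.
by apply: lowzZ; exact: claimB.
Qed.

Lemma G_eq N : (d <= N)%N -> forall k, (k < d.+1)%N ->
  (expser N.+1 L)`_k = c ^+ k * E`_k.
Proof.
move=> hN k hk.
set G := expser N.+1 L.
have hZ : lowz d.+1 (G - sig E).
  apply: (@ode_uniq _ d (L^`())).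
    rewrite coefB expser0; last exact: L_low.
    by rewrite (coef_compZX ((m*d)%:R^-1) E 0) expr0 mul1r E0 subrr.
  apply: ode_split; last exact: claimC.
  by apply: (lowz_le hN); apply: expser_deriv; exact: L_low.
have := hZ k hk; rewrite coefB (coef_compZX ((m*d)%:R^-1) E k).
by move=> /eqP; rewrite subr_eq0 => /eqP.
Qed.

Lemma coef_identity i : (i < d.+1)%N ->
  c ^+ i * E`_i *+ (m ^_ i * d ^_ i) = p`_(d - i).
Proof.
move=> hi; have hid : (i <= d)%N by rewrite -ltnS.
have him : (i <= m)%N by apply: leq_trans hdm.
rewrite /Ep coef_poly hi /pcoef.
set K : R := (m * d)%:R.
have hK : K != 0 by rewrite pnatr_eq0 muln_eq0 negb_or -!lt0n hd (leq_trans hd hdm).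
have hKi : K ^+ i != 0 by rewrite expf_neq0.
set A : R := ((m - i)`! * (d - i)`!)%:R.
set F : R := (m ^_ i * d ^_ i)%:R.
have hA : A != 0 by rewrite pnatr_eq0 muln_eq0 negb_or -!lt0n !fact_gt0.
have hF : F != 0.
  by rewrite pnatr_eq0 muln_eq0 negb_or -!lt0n !ffact_gt0 him hid.
have hAF : (m`! * d`!)%:R = A * F.
  rewrite -natrM; congr (_%:R).
  rewrite -(ffact_fact him) -(ffact_fact hid); ring.
have hs : (-1) ^+ i * (-1) ^+ i = 1 :> R by rewrite -exprMn mulrNN mulr1 expr1n.
rewrite -mulr_natr -/F hAF exprVn.
transitivity (((-1) ^+ i * (-1) ^+ i) * p`_(d - i)); last by rewrite hs mul1r.
field; by rewrite hKi !pnatr_eq0 -!lt0n !fact_gt0 !ffact_gt0 him hid.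
Qed.

Lemma rhsE : ('X^(m - d))%:P * subst_xy p
   = \sum_(i < d.+1) term p`_(d - i) (m - i) (d - i).
Proof.
rewrite /subst_xy hsz poly_def mul_polyC scaler_sumr (reindex_inj rev_ord_inj) /=.
apply: eq_bigr => i _; rewrite subSS /term scalerA mul_polyC -scalerAr -exprD.
have -> : (m - d + (d - i) = m - i)%N by have := ltn_ord i; lia.
done.
Qed.

Lemma mainEq N : (d.+1 <= N)%N ->
  expOp L N (monoYX R m d) = ('X^(m - d))%:P * subst_xy p.
Proof.
case: N => [|N] //; rewrite ltnS => hN.
rewrite expOpE -/(expser N.+1 L) applyOp_mono rhsE.
apply: eq_bigr => i _; rewrite (G_eq hN) // coef_identity //.
Qed.

End Main.

Theorem mainTheorem15 (R : realFieldType) (m d : nat) (p : {poly R}) :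
  (1 <= d)%N -> (d <= m)%N ->
  p \is monic -> size p = d.+1 -> nonneg_rooted p ->
  (exists N0 : nat, forall N : nat, (N0 <= N)%N ->
     expOp (- Rhat m d (RSp m d p)) N (monoYX R m d)
     = ('X^(m - d))%:P * subst_xy p)
  /\
  (forall q : {poly R},
     q \is monic -> size q = d.+1 -> nonneg_rooted q ->
     RSp m d q = RSp m d p -> q = p).
Proof.
move=> hd hdm hmon hsz _; split.
  by exists d.+1 => N hN; apply: mainEq.
move=> q hqmon hqsz _ hRq.
have := @mainEq R m d q hd hdm hqsz hqmon d.+1 (leqnn _).
rewrite hRq (@mainEq R m d p hd hdm hsz hmon d.+1 (leqnn _)).
have hX : ('X^(m - d))%:P != 0 :> {poly {poly R}}.
  by rewrite polyC_eq0 monic_neq0 // monicXn.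
move=> /(mulfI hX) h.
apply/polyP => j; have := congr1 (fun f : {poly {poly R}} => f`_j) h.
rewrite /subst_xy !coef_poly hqsz hsz.
case: ltnP => hj; last by rewrite !nth_default ?hqsz ?hsz.
move=> /(congr1 (fun g : {poly R} => g`_j)); rewrite !coefCM coefXn eqxx !mulr1.
by move=> ->.
Qed.
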